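(* For every $n\ge 1$, \[ \mathrm{URL}_n=\{\mathrm{shape}(\Psi(\sigma)) : \sigma\in \mathrm{And}^{I}_n\}=\{\mathrm{shape}(\Psi(\sigma)) : \sigma\in \mathrm{And}^{II}_n\}=\{\mathrm{shape}(\Psi(\sigma)) : \sigma\in \mathrm{RS}_n\}. \]
   Context: A binary tree is a rooted tree in which every vertex has no child, a single left child, a single right child, or both. An increasing binary tree is a binary tree with distinct labels increasing along every path from the root. The map $\Psi$ sends a word $\pi$ of distinct integers to an increasing binary tree: $\Psi(\emptyset)=\emptyset$; otherwise write $\pi=\sigma\, i\,\tau$ with $i$ the least letter of $\pi$, and let $\Psi(\pi)$ have root $i$, left subtree $\Psi(\sigma)$ and right subtree $\Psi(\tau)$. $\mathrm{shape}(T)$ is the underlying unlabeled binary tree of $T$. $\mathrm{URL}_n$ is the set of unlabeled rooted binary trees with $n$ vertices in which no vertex has a left child but no right child. Andr\'e permutations: the empty word and one-letter words are Andr\'e I and Andr\'e II. A word $\sigma$ of $n\ge2$ distinct integers, written $\sigma=\tau\,\min(\sigma)\,\tau'$, is Andr\'e I (resp. II) if $\tau,\tau'$ are Andr\'e I (resp. II) and the largest (resp. smallest) letter of $\tau\tau'$ lies in $\tau'$. $\mathrm{And}^{I}_n$, $\mathrm{And}^{II}_n$ denote these permutations of $[n]$. A permutation $\sigma=\sigma_1\cdots\sigma_n$ of $[n]$ is simsun if $\sigma_n=n$ and for every $k\in[n]$ the subword of $\sigma$ formed by the letters $1,\dots,k$ has no index $i$ with $w_i>w_{i+1}>w_{i+2}$.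 $\mathrm{RS}_n$ is the set of simsun permutations of $[n]$. *)

(* Defs.v *)
From mathcomp Require Import all_boot.
Set Implicit Arguments. Unset Strict Implicit. Unset Printing Implicit Defensive.

Inductive btree := BLeaf | BNode of btree & btree.

Inductive ltree := LLeaf | LNode of ltree & nat & ltree.

Fixpoint tshape (t : ltree) : btree :=
  match t with
  | LLeaf => BLeaf
  | LNode l _ r => BNode (tshape l) (tshape r)
  end.

Fixpoint bsize (t : btree) : nat :=
  match t with BLeaf => 0 | BNode l r => (bsize l + bsize r).+1 end.

Definition is_node (t : btree) : bool := if t is BNode _ _ then true else false.

Fixpoint no_lonely_left (t : btree) : bool :=
  match t with
  | BLeaf => true
  | BNode l r => ~~ (is_node l && ~~ is_node r) && no_lonely_left l && no_lonely_left r
  end.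

Definition URL (n : nat) (t : btree) : Prop := bsize t = n /\ no_lonely_left t.

(* least / largest letter of a word (meaningful for nonempty words) *)
Definition wmin (w : seq nat) : nat := foldr minn (head 0 w) w.
Definition wmax (w : seq nat) : nat := foldr maxn 0 w.

Definition wleft (w : seq nat) : seq nat := take (index (wmin w) w) w.
Definition wright (w : seq nat) : seq nat := drop (index (wmin w) w).+1 w.

(* Psi, defined by recursion with fuel; fuel = size w suffices since the
   two factors are strictly shorter. *)
Fixpoint psi_fuel (k : nat) (w : seq nat) : ltree :=
  match k with
  | 0 => LLeaf
  | k'.+1 => if w is [::] then LLeaf
             else LNode (psi_fuel k' (wleft w)) (wmin w) (psi_fuel k' (wright w))
  end.
Definition Psi (w : seq nat) : ltree := psi_fuel (size w) w.

Fixpoint andreI_fuel (k : nat) (w : seq nat) : bool :=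
  match k with
  | 0 => size w <= 1
  | k'.+1 =>
    (size w <= 1) ||
    [&& andreI_fuel k' (wleft w), andreI_fuel k' (wright w)
      & wmax (wleft w ++ wright w) \in wright w]
  end.
Definition andreI (w : seq nat) : bool := andreI_fuel (size w) w.

Fixpoint andreII_fuel (k : nat) (w : seq nat) : bool :=
  match k with
  | 0 => size w <= 1
  | k'.+1 =>
    (size w <= 1) ||
    [&& andreII_fuel k' (wleft w), andreII_fuel k' (wright w)
      & wmin (wleft w ++ wright w) \in wright w]
  end.
Definition andreII (w : seq nat) : bool := andreII_fuel (size w) w.

Definition is_perm (n : nat) (w : seq nat) : bool := perm_eq w (iota 1 n).

Definition AndI (n : nat) (w : seq nat) : Prop := is_perm n w /\ andreI w.
Definition AndII (n : nat) (w : seq nat) : Prop := is_perm n w /\ andreII w.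

Definition no_double_descent (s : seq nat) : bool :=
  all (fun i => ~~ ((nth 0 s i > nth 0 s i.+1) && (nth 0 s i.+1 > nth 0 s i.+2)))
      (iota 0 (size s - 2)).

Definition simsun (n : nat) (w : seq nat) : Prop :=
  is_perm n w /\ nth 0 w n.-1 = n /\
  forall k, 1 <= k <= n -> no_double_descent [seq x <- w | x <= k].

(* Main.v *)
Require Import Defs.
From mathcomp Require Import all_boot zify.
Set Implicit Arguments. Unset Strict Implicit. Unset Printing Implicit Defensive.

Fixpoint word (L : ltree) : seq nat :=
  match L with LLeaf => [::] | LNode l x r => word l ++ x :: word r end.

Fixpoint incr (L : ltree) : bool :=
  match L with LLeaf => true
  | LNode l x r => all (fun y => x < y) (word l ++ word r) && incr l && incr r end.

Lemma foldr_minn_le h w y : y \in w -> foldr minn h w <= y.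
Proof.
elim: w => //= a w IH; rewrite in_cons => /orP[/eqP->|/IH H]; first exact: geq_minl.
by apply: leq_trans (geq_minr _ _) H.
Qed.

Lemma foldr_minn_mem h w : foldr minn h w \in h :: w.
Proof.
elim: w => [|a w IH] /=; first by rewrite mem_head.
rewrite /minn; case: ifP => _; first by rewrite !in_cons eqxx orbT.
move: IH; rewrite !in_cons => /orP[->//|->]; by rewrite !orbT.
Qed.

Lemma wmin_le w y : y \in w -> wmin w <= y.
Proof. exact: foldr_minn_le. Qed.

Lemma wmin_mem w : w != [::] -> wmin w \in w.
Proof.
case: w => // a w _; rewrite /wmin.
by have := foldr_minn_mem a (a :: w); rewrite in_cons => /orP[/eqP->|]; rewrite ?mem_head.
Qed.

Lemma foldr_maxn_ge w y : y \in w -> y <= foldr maxn 0 w.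
Proof.
elim: w => //= a w IH; rewrite in_cons => /orP[/eqP->|/IH H]; first exact: leq_maxl.
by apply: leq_trans H (leq_maxr _ _).
Qed.

Lemma foldr_maxn_mem w : foldr maxn 0 w \in 0 :: w.
Proof.
elim: w => [|a w IH] /=; first by rewrite mem_head.
rewrite /maxn; case: ifP => _.
  move: IH; rewrite !in_cons => /orP[->//|->]; by rewrite !orbT.
by rewrite !in_cons eqxx orbT.
Qed.

Lemma wmax_ge w y : y \in w -> y <= wmax w.
Proof. exact: foldr_maxn_ge. Qed.

Lemma wmax_mem w : wmax w != 0 -> wmax w \in w.
Proof.
by move=> H; have := foldr_maxn_mem w; rewrite in_cons (negbTE H).
Qed.

Lemma wmin_eq w x : x \in w -> (forall y, y \in w -> x <= y) -> wmin w = x.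
Proof.
move=> xw H; apply/eqP; rewrite eqn_leq wmin_le //=; apply: H; apply: wmin_mem.
by case: w xw.
Qed.

Lemma node_split l x r : all (fun y => x < y) (word l ++ word r) ->
  [/\ wmin (word l ++ x :: word r) = x,
      wleft (word l ++ x :: word r) = word l &
      wright (word l ++ x :: word r) = word r].
Proof.
move=> /allP H.
have xl : x \notin word l.
  by apply/negP => h; have := H x; rewrite mem_cat h ltnn => /(_ isT).
have mx : wmin (word l ++ x :: word r) = x.
  apply: wmin_eq; first by rewrite mem_cat mem_head orbT.
  move=> y; rewrite mem_cat in_cons => /or3P[h|/eqP->//|h]; apply: ltnW; apply: H;
  by rewrite mem_cat h ?orbT.
have ix : index x (word l ++ x :: word r) = size (word l).
  by rewrite index_cat (negbTE xl) /= eqxx addn0.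
split => //; rewrite /wleft /wright mx ix.
  exact: take_size_cat.
by rewrite -cat_rcons drop_size_cat // size_rcons.
Qed.

Lemma psi_word L k : incr L -> size (word L) <= k -> psi_fuel k (word L) = L.
Proof.
elim: L k => [|l IHl x r IHr] k; first by case: k.
case: k => [|k] /=; first by rewrite size_cat /= addnS.
move=> /andP[/andP[H il] ir]; rewrite size_cat /= addnS ltnS => hs.
case E: (word l ++ x :: word r); first by case: (word l) E.
rewrite -E; have [-> -> ->] := node_split H.
rewrite IHl ?IHr //; apply: leq_trans hs; lia.
Qed.

Lemma ex_tree n w : size w <= n -> uniq w -> exists L, incr L /\ word L = w.
Proof.
elim: n w => [|n IH] w.
  by rewrite leqn0 => /nilP -> _; exists LLeaf.
case: w => [|a w0]; first by exists LLeaf.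
set w := a :: w0 => hs uw.
have xw : wmin w \in w by apply: wmin_mem.
set x := wmin w in xw *.
set i := index x w.
have iw : i < size w by rewrite index_mem.
have Ew : w = take i w ++ x :: drop i.+1 w.
  by rewrite -{1}(cat_take_drop i w) (drop_nth 0 iw) nth_index.
have := uw; rewrite {1}Ew cat_uniq /= negb_or => /and3P[u1 /andP[xn _] /andP[xd u2]].
have [L1 [i1 w1]] : exists L, incr L /\ word L = take i w.
  apply: IH => //; rewrite size_take iw; move: hs; rewrite -/w; lia.
have [L2 [i2 w2]] : exists L, incr L /\ word L = drop i.+1 w.
  apply: IH => //; rewrite size_drop; move: hs iw; rewrite -/w; lia.
exists (LNode L1 x L2); split; last by rewrite /= w1 w2 -Ew.
rewrite /= i1 i2 !andbT w1 w2; apply/allP => y yin.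
have yw : y \in w by rewrite Ew mem_cat in_cons; move: yin; rewrite mem_cat => /orP[->|->]; rewrite ?orbT.
rewrite ltn_neqAle wmin_le // andbT; apply/eqP => exy.
move: yin; rewrite -exy mem_cat; by rewrite (negbTE xn) (negbTE xd).
Qed.


Fixpoint AI (L : ltree) : bool :=
  match L with LLeaf => true
  | LNode l x r => (size (word l ++ word r) == 0) ||
      [&& AI l, AI r & wmax (word l ++ word r) \in word r] end.
Fixpoint AII (L : ltree) : bool :=
  match L with LLeaf => true
  | LNode l x r => (size (word l ++ word r) == 0) ||
      [&& AII l, AII r & wmin (word l ++ word r) \in word r] end.

Lemma andreI_word L k : incr L -> size (word L) <= k -> andreI_fuel k (word L) = AI L.
Proof.
elim: L k => [|l IHl x r IHr] k; first by case: k.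
case: k => [|k] /=; first by rewrite size_cat /= addnS.
move=> /andP[/andP[H il] ir]; rewrite size_cat /= addnS ltnS => hs.
have [_ -> ->] := node_split H.
rewrite size_cat ltnS leqn0 IHl ?IHr //; apply: leq_trans hs; lia.
Qed.

Lemma andreII_word L k : incr L -> size (word L) <= k -> andreII_fuel k (word L) = AII L.
Proof.
elim: L k => [|l IHl x r IHr] k; first by case: k.
case: k => [|k] /=; first by rewrite size_cat /= addnS.
move=> /andP[/andP[H il] ir]; rewrite size_cat /= addnS ltnS => hs.
have [_ -> ->] := node_split H.
rewrite size_cat ltnS leqn0 IHl ?IHr //; apply: leq_trans hs; lia.
Qed.

Lemma size_word L : size (word L) = bsize (tshape L).
Proof. by elim: L => //= l IHl x r IHr; rewrite size_cat /= addnS IHl IHr. Qed.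

Lemma is_node_word L : is_node (tshape L) = (word L != [::]).
Proof. by case: L => //= l x r; case: (word l). Qed.

Lemma word_nil L : word L = [::] -> L = LLeaf.
Proof. by case: L => // l x r /=; case: (word l). Qed.

Lemma AI_nll L : AI L -> no_lonely_left (tshape L).
Proof.
elim: L => //= l IHl x r IHr /orP[|/and3P[al ar m]].
  rewrite size_cat addn_eq0 !size_eq0 => /andP[/eqP e1 /eqP e2].
  by rewrite (word_nil e1) (word_nil e2).
rewrite IHl // IHr // !andbT !is_node_word; apply/negP => /andP[_ /negP []].
by apply/eqP => e; rewrite e in m.
Qed.

Lemma AII_nll L : AII L -> no_lonely_left (tshape L).
Proof.
elim: L => //= l IHl x r IHr /orP[|/and3P[al ar m]].
  rewrite size_cat addn_eq0 !size_eq0 => /andP[/eqP e1 /eqP e2].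
  by rewrite (word_nil e1) (word_nil e2).
rewrite IHl // IHr // !andbT !is_node_word; apply/negP => /andP[_ /negP []].
by apply/eqP => e; rewrite e in m.
Qed.


Fixpoint preI (t : btree) (m : nat) : ltree :=
  match t with BLeaf => LLeaf
  | BNode l r => LNode (preI l m.+1) m (preI r (m.+1 + bsize l)) end.
Fixpoint preII (t : btree) (m : nat) : ltree :=
  match t with BLeaf => LLeaf
  | BNode l r => LNode (preII l (m.+1 + bsize r)) m (preII r m.+1) end.
Fixpoint sims (t : btree) (m : nat) : ltree :=
  match t with BLeaf => LLeaf
  | BNode l r => LNode (preII l m.+1) m (sims r (m.+1 + bsize l)) end.

Lemma perm_node (A B : seq nat) m a b :
  perm_eq A (iota m.+1 a) -> perm_eq B (iota (m.+1 + a) b) ->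
  perm_eq (A ++ m :: B) (iota m (a + b).+1).
Proof.
move=> pA pB; rewrite /= iotaD -cat1s perm_catCA /= perm_cons.
exact: perm_cat.
Qed.

Lemma incr_node l m r a b :
  perm_eq (word l) (iota m.+1 a) -> perm_eq (word r) (iota (m.+1 + a) b) ->
  incr l -> incr r -> incr (LNode l m r).
Proof.
move=> pA pB il ir /=; rewrite il ir !andbT; apply/allP => y.
rewrite mem_cat (perm_mem pA) (perm_mem pB) !mem_iota; lia.
Qed.

Lemma preI_ok t m : perm_eq (word (preI t m)) (iota m (bsize t)) /\ incr (preI t m).
Proof.
elim: t m => [|l IHl r IHr] m //=.
have [p1 i1] := IHl m.+1; have [p2 i2] := IHr (m.+1 + bsize l).
split; first exact: perm_node.
exact: (incr_node p1 p2).
Qed.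

Lemma preII_ok t m : perm_eq (word (preII t m)) (iota m (bsize t)) /\ incr (preII t m).
Proof.
elim: t m => [|l IHl r IHr] m //=.
have [p1 i1] := IHl (m.+1 + bsize r); have [p2 i2] := IHr m.+1.
have H : perm_eq (word (preII r m.+1) ++ m :: word (preII l (m.+1 + bsize r)))
                 (iota m (bsize r + bsize l).+1) by exact: perm_node.
split.
  rewrite [bsize l + _]addnC; apply: (perm_trans _ H).
  apply/permP => p; rewrite !count_cat /=; lia.
move: (incr_node p2 p1 i2 i1) => /= /andP[/andP[h _] _].
rewrite i1 i2 !andbT; move: h; rewrite !all_cat andbC //.
Qed.

Lemma sims_ok t m : perm_eq (word (sims t m)) (iota m (bsize t)) /\ incr (sims t m).
Proof.
elim: t m => [|l IHl r IHr] m //=.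
have [p1 i1] := preII_ok l m.+1; have [p2 i2] := IHr (m.+1 + bsize l).
split; first exact: perm_node.
exact: (incr_node p1 p2).
Qed.

Lemma shape_preI t m : tshape (preI t m) = t.
Proof. by elim: t m => //= l IHl r IHr m; rewrite IHl IHr. Qed.
Lemma shape_preII t m : tshape (preII t m) = t.
Proof. by elim: t m => //= l IHl r IHr m; rewrite IHl IHr. Qed.
Lemma shape_sims t m : tshape (sims t m) = t.
Proof. by elim: t m => //= l IHl r IHr m; rewrite shape_preII IHr. Qed.



Lemma AI_preI t m : no_lonely_left t -> AI (preI t m).
Proof.
elim: t m => [|l IHl r IHr] m //= /andP[/andP[nl hl] hr].
have [p1 _] := preI_ok l m.+1; have [p2 _] := preI_ok r (m.+1 + bsize l).
case: r nl hr IHr p2 => [|r1 r2] nl hr IHr p2.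
  by move: nl; case: l {hl IHl p1 p2}.
apply/orP; right; rewrite IHl // IHr //=.
set R := word (preI (BNode r1 r2) _) in p2 *.
set Lw := word (preI l m.+1) in p1 *.
set y := m.+1 + bsize l + bsize (BNode r1 r2) - 1.
have yr : y \in R by rewrite (perm_mem p2) mem_iota /y /=; lia.
have yle : y <= wmax (Lw ++ R) by apply: wmax_ge; rewrite mem_cat yr orbT.
have : wmax (Lw ++ R) \in Lw ++ R by apply: wmax_mem; rewrite -lt0n; apply: leq_trans yle; rewrite /y /=; lia.
rewrite mem_cat => /orP[|//].
rewrite (perm_mem p1) mem_iota => /andP[_ h]; move: yle h; rewrite /y /=; lia.
Qed.

Lemma AII_preII t m : no_lonely_left t -> AII (preII t m).
Proof.
elim: t m => [|l IHl r IHr] m //= /andP[/andP[nl hl] hr].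
have [p1 _] := preII_ok l (m.+1 + bsize r); have [p2 _] := preII_ok r m.+1.
case: r nl hr IHr p1 p2 => [|r1 r2] nl hr IHr p1 p2.
  by move: nl; case: l {hl IHl p1 p2}.
apply/orP; right; rewrite IHl // IHr //=.
set R := word (preII (BNode r1 r2) _) in p2 *.
set Lw := word (preII l _) in p1 *.
have yr : m.+1 \in R by rewrite (perm_mem p2) mem_iota /=; lia.
have yLR : m.+1 \in Lw ++ R by rewrite mem_cat yr orbT.
have yle : wmin (Lw ++ R) <= m.+1 by apply: wmin_le.
have : wmin (Lw ++ R) \in Lw ++ R by apply: wmin_mem; case: (Lw ++ R) yLR.
rewrite mem_cat => /orP[|//].
rewrite (perm_mem p1) mem_iota => /andP[h _]; move: yle h; rewrite /=; lia.
Qed.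

Lemma last_sims t m : no_lonely_left t -> is_node t ->
  last 0 (word (sims t m)) = m + bsize t - 1.
Proof.
elim: t m => [|l IHl r IHr] m //= /andP[/andP[nl hl] hr] _.
case: r nl hr IHr => [|r1 r2] nl hr IHr.
  by case: l nl {hl IHl} => //= _; lia.
have := IHr (m.+1 + bsize l) hr isT.
have ne : word (sims (BNode r1 r2) (m.+1 + bsize l)) != [::].
  by rewrite -size_eq0 size_word shape_sims.
rewrite last_cat.
move: ne; case: (word (sims (BNode r1 r2) _)) => [|a s] //= _ ->; lia.
Qed.


Fixpoint rdd (w : seq nat) : bool :=
  match w with
  | a :: s => (match s with b :: c :: _ => ~~ ((a > b) && (b > c)) | _ => true end) && rdd s
  | [::] => true end.

Fixpoint lasc (w : seq nat) : bool :=
  match w with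
  | a :: s => match s with [::] => true | [:: b] => a < b | _ => lasc s end
  | [::] => true end.

Lemma ndd_rdd s : no_double_descent s = rdd s.
Proof.
elim: s => [|a s IH] //.
case: s IH => [|b [|c s]] IH //.
transitivity (~~ ((a > b) && (b > c)) && no_double_descent [:: b, c & s]);
  last by rewrite IH.
rewrite /no_double_descent.
have -> : size [:: a, b, c & s] - 2 = (size s).+1 by rewrite /=; lia.
have -> : size [:: b, c & s] - 2 = size s by rewrite /=; lia.
rewrite /= ; congr (_ && _).
rewrite -(addn0 1) iotaDl all_map; apply: eq_all => i /=.
by rewrite add0n.
Qed.

Lemma rdd_factor p a b c s : b < a -> c < b -> rdd (p ++ a :: b :: c :: s) = false.
Proof.
move=> h1 h2; elim: p => [|x p IH] /=; first by rewrite h1 h2.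
by rewrite IH andbF.
Qed.

Lemma rdd_cons_lt x v : rdd v -> x < head x.+1 v -> rdd (x :: v).
Proof.
case: v => [|y [|z v]] //= h hx; rewrite h andbT.
by apply/negP => /andP[? ?]; lia.
Qed.

Lemma lasc_behead a s : lasc (a :: s) -> lasc s.
Proof. by case: s => [|b [|c s]]. Qed.

Lemma rdd_join u x v : rdd u -> lasc u -> rdd (x :: v) -> x < head x.+1 v ->
  rdd (u ++ x :: v).
Proof.
elim: u => [|a u IH] //= /andP[h1 h2] la hv hx.
rewrite IH //; last exact: lasc_behead la.
rewrite andbT.
case: u h1 h2 la {IH} => [|b [|c u]] //= h1 h2 la.
  by case: v hv hx => [|y v] //= _ hx; apply/negP => /andP[? ?]; lia.
by apply/negP => /andP[? ?]; lia.
Qed.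

Lemma head_lt x (v : seq nat) : all (fun y => x < y) v -> x < head x.+1 v.
Proof. by case: v => //= y v /andP[]. Qed.

Lemma lasc_cons2 a s : 1 < size s -> lasc (a :: s) = lasc s.
Proof. by case: s => [|b [|c s]]. Qed.

Lemma lasc_cat u w : 1 < size w -> lasc (u ++ w) = lasc w.
Proof.
move=> hw; elim: u => [|a u IH] //.
by rewrite cat_cons lasc_cons2 // size_cat; lia.
Qed.

Fixpoint prune (k : nat) (L : ltree) : ltree :=
  match L with LLeaf => LLeaf
  | LNode l x r => if x <= k then LNode (prune k l) x (prune k r) else LLeaf end.

Lemma filter_prune k L : incr L -> [seq y <- word L | y <= k] = word (prune k L).
Proof.
elim: L => [|l IHl x r IHr] //= /andP[/andP[H il] ir].
case: ifP => hx; rewrite filter_cat /= hx; first by rewrite IHl // IHr.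
have E : forall s, all (fun y => x < y) s -> [seq y <- s | y <= k] = [::].
  elim => //= y s IH /andP[hy hs]; rewrite IH //.
  by have -> : (y <= k) = false by apply/negP => ?; move/negP: hx; apply; lia.
by move: H; rewrite all_cat => /andP[/E -> /E ->].
Qed.

Lemma incr_prune k L : incr L -> incr (prune k L).
Proof.
elim: L => [|l IHl x r IHr] //= /andP[/andP[H il] ir].
case: ifP => hx //=; rewrite IHl // IHr // !andbT -!filter_prune // -filter_cat.
by rewrite all_filter; apply: sub_all H => y /= hy; rewrite hy implybT.
Qed.

Definition nll L := no_lonely_left (tshape L).

Fixpoint gs (L : ltree) : bool :=
  match L with LLeaf => true | LNode l x r => nll l && gs r end.

Lemma C0 L : incr L -> nll L -> rdd (word L) && lasc (word L).
Proof.
rewrite /nll; elim: L => [|l IHl x r IHr] //= /andP[/andP[H il] ir] /andP[/andP[nl hl] hr].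
have [rl al] := andP (IHl il hl); have [rr ar] := andP (IHr ir hr).
move: H; rewrite all_cat => /andP[Hl Hr].
rewrite rdd_join //; last exact: head_lt; last exact: rdd_cons_lt (head_lt Hr).
move: nl; rewrite !is_node_word.
case E: (word r) Hr ar => [|y [|z s]] Hr ar /=.
- by case: (word l) => //=; rewrite andbF.
- move=> _; rewrite lasc_cat //=; by move: Hr => /= /andP[].
- by move=> _; rewrite lasc_cat.
Qed.

Lemma C L : incr L -> gs L -> rdd (word L).
Proof.
elim: L => [|l IHl x r IHr] //= /andP[/andP[H il] ir] /andP[nl hr].
have [rl al] := andP (C0 il nl).
move: H; rewrite all_cat => /andP[Hl Hr].
rewrite rdd_join //; last exact: head_lt; exact: rdd_cons_lt (IHr ir hr) (head_lt Hr).
Qed.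


Lemma is_node_prune k t m : is_node (tshape (prune k (preII t m))) = is_node t && (m <= k).
Proof. by case: t => //= l r; case: ifP. Qed.

Lemma A_prune k t m : no_lonely_left t -> nll (prune k (preII t m)).
Proof.
rewrite /nll; elim: t m => [|l IHl r IHr] m //= /andP[/andP[nl hl] hr].
case: ifP => hm //=; rewrite !is_node_prune IHl // IHr // !andbT.
case: (is_node l) (is_node r) nl => [] [] //= _.
apply/negP => /andP[a /negP b]; apply: b; lia.
Qed.

Lemma B_prune k t m : no_lonely_left t -> gs (prune k (sims t m)).
Proof.
elim: t m => [|l IHl r IHr] m //= /andP[/andP[nl hl] hr].
by case: ifP => hm //=; rewrite A_prune // IHr.
Qed.

Lemma lonely_factor L : incr L -> ~~ nll L ->
  (exists p a b c s, word L = p ++ [:: a, b, c & s] /\ b < a /\ c < b) \/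
  (exists p a b, word L = p ++ [:: a; b] /\ b < a).
Proof.
rewrite /nll; elim: L => [|l IHl x r IHr] //= /andP[/andP[H il] ir].
move: H; rewrite all_cat => /andP[/allP Hl /allP Hr].
case hn: (is_node (tshape l) && ~~ is_node (tshape r)) => /=.
  move: hn; rewrite !is_node_word => /andP[nl]; rewrite negbK => /eqP ->.
  move: nl Hl; case/lastP: (word l) => [|p a] // _ Hl _.
  right; exists p, a, x; split; first by rewrite cat_rcons.
  by apply: Hl; rewrite mem_rcons mem_head.
case hl: (no_lonely_left (tshape l)) => /=.
  case hr: (no_lonely_left (tshape r)) => //= _.
  case: (IHr ir (negbT hr)) => [[p [a [b [c [s [E h]]]]]]|[p [a [b [E h]]]]].
    by left; exists (word l ++ x :: p), a, b, c, s; rewrite E -catA.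
  by right; exists (word l ++ x :: p), a, b; rewrite E -catA.
move=> _; case: (IHl il (negbT hl)) => [[p [a [b [c [s [E h]]]]]]|[p [a [b [E h]]]]].
  by left; exists p, a, b, c, (s ++ x :: word r); rewrite E -catA.
left; exists p, a, b, x, (word r); rewrite E -catA; split => //; split => //.
by apply: Hl; rewrite E mem_cat !in_cons eqxx !orbT.
Qed.


Lemma perm_tree n s : is_perm n s ->
  exists L, [/\ incr L, word L = s, Psi s = L & bsize (tshape L) = n].
Proof.
move=> hp; have us : uniq s by rewrite (perm_uniq hp) iota_uniq.
have [L [iL wL]] := ex_tree (leqnn (size s)) us.
exists L; split => //.
  by rewrite /Psi -wL psi_word.
by rewrite -size_word wL (perm_size hp) size_iota.
Qed.

Lemma mem_perm n s y : is_perm n s -> y \in s -> 1 <= y <= n.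
Proof. by move=> hp; rewrite (perm_mem hp) mem_iota; lia. Qed.

Theorem proposition2p4 (n : nat) : 1 <= n ->
  forall t : btree,
    (URL n t <-> exists sigma, AndI n sigma /\ tshape (Psi sigma) = t) /\
    (URL n t <-> exists sigma, AndII n sigma /\ tshape (Psi sigma) = t) /\
    (URL n t <-> exists sigma, simsun n sigma /\ tshape (Psi sigma) = t).
Proof.
move=> n1 t; split; [|split]; split.
- case=> hs hn; have [p i] := preI_ok t 1.
  exists (word (preI t 1)); split; last by rewrite /Psi psi_word // shape_preI.
  split; first by rewrite /is_perm -hs.
  by rewrite /andreI andreI_word // AI_preI.
- case=> s [[hp ha] <-]; have [L [iL wL -> hb]] := perm_tree hp.
  split => //; apply: AI_nll; by rewrite -(andreI_word (k := size s)) // wL.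
- case=> hs hn; have [p i] := preII_ok t 1.
  exists (word (preII t 1)); split; last by rewrite /Psi psi_word // shape_preII.
  split; first by rewrite /is_perm -hs.
  by rewrite /andreII andreII_word // AII_preII.
- case=> s [[hp ha] <-]; have [L [iL wL -> hb]] := perm_tree hp.
  split => //; apply: AII_nll; by rewrite -(andreII_word (k := size s)) // wL.
- case=> hs hn; have [p i] := sims_ok t 1.
  exists (word (sims t 1)); split; last by rewrite /Psi psi_word // shape_sims.
  split; first by rewrite /is_perm -hs.
  split.
    have sz : size (word (sims t 1)) = n by rewrite size_word shape_sims.
    rewrite -{1}sz nth_last last_sims //; first lia.
    by case: t hs {hn p i sz} => //= e; rewrite -e in n1.
  move=> k _; rewrite ndd_rdd filter_prune //.
  by apply: C; [exact: incr_prune | exact: B_prune].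
- case=> s [[hp [hl hk]] <-]; have [L [iL wL -> hb]] := perm_tree hp.
  split => //; apply/negPn/negP => /(lonely_factor iL).
  case=> [[p [a [b [c [s' [E [h1 h2]]]]]]]|[p [a [b [E h]]]]].
    have ha : a \in s by rewrite -wL E mem_cat !in_cons eqxx !orbT.
    have := hk a (mem_perm hp ha).
    rewrite -wL E filter_cat /= leqnn.
    have -> : b <= a by lia.
    have -> : c <= a by lia.
    by rewrite ndd_rdd rdd_factor.
  have ha : a \in s by rewrite -wL E mem_cat !in_cons eqxx !orbT.
  have := mem_perm hp ha.
  have sz : size s = n by rewrite (perm_size hp) size_iota.
  move: hl sz; rewrite -wL E size_cat /= => hl sz.
  rewrite nth_cat -sz in hl.
  move: hl; case: ifP => [|_]; first lia.
  have -> : (size p + 2).-1 - size p = 1 by lia.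
  move=> /= e; lia.
Qed.
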